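(* Let $r\ge2$, $t\ge1$, $0<\mu<1/(3r^2)^{12}$, $0<\eta<\mu^2/3$, and let $n$ be sufficiently large. Fix an $r$-partition $Q=(V_1,\dots,V_r)$ of $[n]$ and two distinct vertices $x,y\in V_1$. Then there is a set $\mathcal P$ of $r$-partitions of $[n]\setminus\{x,y\}$ with $|\mathcal P|\le e^{\mu^{2/3}n}$ such that for every $G\in F_Q^*(n,T_{r+1}^t,\eta,\mu)$, every optimal $r$-partition of $G-\{x,y\}$ belongs to $\mathcal P$.
   Context: A digraph has no loops and at most one arc in each direction between two vertices. $T_{r+1}^t$ is the blow-up of the transitive tournament $T_{r+1}$ in which each vertex is replaced by an independent set of size $t$ and each arc $ij$ by all arcs from the $i$-th set to the $j$-th set. For an $r$-partition $Q$ of a vertex set and a digraph $G$ on it, an arc is non-crossing if both endpoints lie in the same part; $Q$ is optimal for $G$ if it minimises the number of non-crossing arcs among all $r$-partitions of that vertex set. $\overrightarrow{e}(U,W)$ is the number of arcs from $U$ to $W$. $F_Q^*(n,T_{r+1}^t,\eta,\mu)$ is the set of labelled $T_{r+1}^t$-free digraphs $G$ on $[n]$ such that $Q=(V_1,\dots,V_r)$ is optimal for $G$, $G$ has at most $\eta n^2$ non-crossing arcs with respect to $Q$, (F2) for all distinct $i,j\in[r]$ and all $U_i\subseteq V_i$, $U_j\subseteq V_j$ with $|U_i|,|U_j|\ge\mu n$ we have $\overrightarrow{e}(U_i,U_j),\overrightarrow{e}(U_j,U_i)\ge\frac16|U_i||U_j|$, and (F3) $||V_i|-n/r|\le\mu n$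 for all $i$. *)

(* Defs.v *)
From Stdlib Require Import Reals.
From mathcomp Require Import all_boot.

Set Implicit Arguments.
Unset Strict Implicit.
Unset Printing Implicit Defensive.

(* A digraph on a finite vertex set T is a relation G : rel T (G u v = "arc u -> v");
   "at most one arc in each direction" is automatic; no loops is the [loopless] condition. *)
Definition loopless (T : finType) (G : rel T) : Prop := forall v, ~~ G v v.

(* An r-partition of T is an assignment of each vertex to one of the r parts
   (ordered parts V_0,...,V_{r-1}; empty parts allowed). *)

Definition noncrossing (T : finType) (r : nat) (G : rel T) (p : {ffun T -> 'I_r}) : nat :=
  #|[set e : T * T | G e.1 e.2 && (p e.1 == p e.2)]|.

Definition optimal (T : finType) (r : nat) (G : rel T) (p : {ffun T -> 'I_r}) : Prop :=
  forall q : {ffun T -> 'I_r}, (noncrossing G p <= noncrossing G q)%N.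

(* arc relation of T_{r+1}^t on vertex set 'I_(r+1) x 'I_t : all arcs from the i-th
   independent set to the j-th one whenever i < j *)
Definition blowupT (r t : nat) : rel ('I_r.+1 * 'I_t) := fun a b => (a.1 < b.1)%N.
Arguments blowupT : clear implicits.

Definition contains (S T : finType) (H : rel S) (G : rel T) : Prop :=
  exists f : S -> T, injective f /\ forall a b, H a b -> G (f a) (f b).

Definition Tfree (T : finType) (r t : nat) (G : rel T) : Prop := ~ contains (@blowupT r t) G.

Definition arcs (T : finType) (G : rel T) (U W : {set T}) : nat :=
  #|[set e : T * T | [&& e.1 \in U, e.2 \in W & G e.1 e.2]]|.

Definition part (T : finType) (r : nat) (p : {ffun T -> 'I_r}) (i : 'I_r) : {set T} :=
  [set v | p v == i].

Notation minus2 x y := {v | v \notin [set x; y]}.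
Definition del2 (T : finType) (G : rel T) (x y : T) : rel (minus2 x y) :=
  fun u v => G (val u) (val v).

Open Scope R_scope.

Definition Fstar (n r t : nat) (eta mu : R) (Q : {ffun 'I_n -> 'I_r}) (G : rel 'I_n) : Prop :=
  loopless G /\ Tfree r t G /\ optimal G Q /\
      INR (noncrossing G Q) <= eta * INR n ^ 2 /\
      (forall (i j : 'I_r) (Ui Uj : {set 'I_n}), i != j ->
         Ui \subset part Q i -> Uj \subset part Q j ->
         mu * INR n <= INR #|Ui| -> mu * INR n <= INR #|Uj| ->
         INR (arcs G Ui Uj) >= / 6 * INR #|Ui| * INR #|Uj| /\
         INR (arcs G Uj Ui) >= / 6 * INR #|Ui| * INR #|Uj|) /\
      (forall i : 'I_r, Rabs (INR #|part Q i| - INR n / INR r) <= mu * INR n).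
Arguments Fstar : clear implicits.
Arguments del2 {T} G x y.

(* Main.v *)
Require Import Defs.
From Stdlib Require Import Reals Lra ZArith.
From mathcomp Require Import all_boot zify.
Set Implicit Arguments. Unset Strict Implicit.
Close Scope R_scope.


Section Count.
Variables (T : finType) (r : nat) (q0 : {ffun T -> 'I_r}).

Definition mis (s : {ffun 'I_r -> 'I_r}) (p : {ffun T -> 'I_r}) :=
  #|[set v | p v != s (q0 v)]|.
Definition agr (s : {ffun 'I_r -> 'I_r}) (p : {ffun T -> 'I_r}) :=
  #|[set v | p v == s (q0 v)]|.

Lemma agr_mis s p : agr s p + mis s p = #|T|.
Proof.
rewrite /agr /mis -(cardsC [set v | p v == s (q0 v)]); congr (_ + _).
by apply: eq_card => v; rewrite !inE.
Qed.

Definition w (K : nat) (s : {ffun 'I_r -> 'I_r}) (p : {ffun T -> 'I_r}) := \prod_(v : T) (if p v == s (q0 v) then K else 1).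

Lemma wE K s p : w K s p = K ^ agr s p.
Proof.
rewrite /w /agr -big_mkcond /= -prod_nat_const.
by apply: eq_bigl => v; rewrite inE.
Qed.

Lemma sum_w K s : \sum_(p : {ffun T -> 'I_r}) w K s p = (K + r.-1) ^ #|T|.
Proof.
rewrite /w -(bigA_distr_bigA (fun v (j : 'I_r) => if j == s (q0 v) then K else 1)) /=.
rewrite -prod_nat_const; apply: eq_bigr => v _.
rewrite (bigD1 (s (q0 v))) //= eqxx; congr (_ + _).
rewrite (eq_bigr (fun _ => 1)); last by move=> j /negbTE ->.
by rewrite sum1_card cardC1 card_ord.
Qed.

Lemma count_lemma (m K : nat) : 0 < K ->
  #|[set p : {ffun T -> 'I_r} | [exists s : {ffun 'I_r -> 'I_r}, mis s p <= m]]|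
    * K ^ (#|T| - m) <= r ^ r * (K + r.-1) ^ #|T|.
Proof.
move=> K0; set P := [set p | _].
rewrite -sum_nat_const.
apply: (@leq_trans (\sum_(p in P) \sum_(s : {ffun 'I_r -> 'I_r}) w K s p)).
  apply: leq_sum => p; rewrite inE => /existsP [s Hs].
  rewrite (bigD1 s) //=; apply: leq_trans (leq_addr _ _).
  rewrite wE.
  apply: leq_pexp2l => //. have := agr_mis s p. move: Hs. rewrite /agr /mis => H1 <-. by rewrite leq_subLR [m + _]addnC leq_add2l.
apply: (@leq_trans (\sum_p \sum_(s : {ffun 'I_r -> 'I_r}) w K s p)).
  by rewrite [X in _ <= X](bigID (fun p => p \in P)) /= leq_addr.
rewrite exchange_big /=.
rewrite (eq_bigr (fun _ => (K + r.-1) ^ #|T|)); last by move=> s _; rewrite sum_w.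
by rewrite sum_nat_const card_ffun !card_ord.
Qed.
End Count.


Lemma card_split (T J : finType) (A : {set T}) (g : T -> J) :
  #|A| = \sum_(j : J) #|[set v in A | g v == j]|.
Proof.
rewrite -sum1_card (partition_big g xpredT) //=.
apply: eq_bigr => j _; rewrite -sum1_card; apply: eq_bigl => v.
by rewrite !inE.
Qed.

Section Core.
Variables (T : finType) (r : nat) (q0 p : {ffun T -> 'I_r}) (a : nat).
Definition UU (i j : 'I_r) := [set v | (q0 v == i) && (p v == j)].

Lemma core_lemma :
  (forall i, exists j, a <= #|UU i j|) ->
  (forall i i' j, i != i' -> a <= #|UU i j| -> a <= #|UU i' j| -> False) ->
  exists s : {ffun 'I_r -> 'I_r}, #|[set v | p v != s (q0 v)]| <= r * r * a.
Proof.
move=> H1 H2.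
have [f Hf] := fin_all_exists H1.
have finj : injective f.
  move=> i i' E; apply/eqP; apply/negPn/negP => Hne.
  by apply: (H2 i i' (f i) Hne (Hf i)); rewrite E.
exists [ffun i => f i].
rewrite (card_split _ (fun v => (q0 v, p v))).
apply: (@leq_trans (\sum_(ij : 'I_r * 'I_r) a)); last first.
  by rewrite sum_nat_const card_prod !card_ord.
apply: leq_sum => [[i j]] _.
case: (eqVneq j (f i)) => [->|Hji].
  rewrite (_ : [set _ in _ | _] = set0) ?cards0 //.
  apply/setP => v; rewrite !inE ffunE.
  apply/negP => /andP [H /eqP [E1 E2]]; by rewrite E1 E2 eqxx in H.
have Hsub : [set v in [set v | p v != [ffun i => f i] (q0 v)] | (q0 v, p v) == (i, j)]
   \subset UU i j.
  apply/subsetP => v; rewrite !inE => /andP [_ /eqP [-> ->]]; by rewrite !eqxx.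
apply: leq_trans (subset_leq_card Hsub) _.
rewrite leqNgt; apply/negP => Hlt.
have Hl : a <= #|UU i j| by apply: ltnW.
set i' := invF finj j.
have Ei' : f i' = j by rewrite /i' f_invF.
have Hne : i != i' by apply/eqP => E; rewrite -E in Ei'; rewrite Ei' eqxx in Hji.
apply: (H2 i i' j Hne Hl); rewrite -Ei'; exact: Hf.
Qed.
End Core.


Section G.
Variables (n r : nat) (Q : {ffun 'I_n -> 'I_r}) (x y : 'I_n) (G : rel 'I_n).
Local Notation T := (minus2 x y).
Definition q0 : {ffun T -> 'I_r} := [ffun u : T => Q (val u)].

Definition vv (e : T * T) : 'I_n * 'I_n := (val e.1, val e.2).
Lemma vv_inj : injective vv.
Proof. by move=> [a b] [c d] [/val_inj -> /val_inj ->]. Qed.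

Lemma nc_restrict : (noncrossing (del2 G x y) q0 <= noncrossing G Q)%N.
Proof.
rewrite /noncrossing -(card_imset _ vv_inj); apply: subset_leq_card.
apply/subsetP => e /imsetP [[a b] ]; rewrite !inE /= /del2 !ffunE => H ->.
by rewrite /vv /=.
Qed.

Lemma arcs_le (p : {ffun T -> 'I_r}) (i i' j : 'I_r) : i != i' ->
  (arcs G (val @: UU q0 p i j) (val @: UU q0 p i' j)
   + arcs G (val @: UU q0 p i' j) (val @: UU q0 p i j)
   <= noncrossing (del2 G x y) p)%N.
Proof.
move=> Hii.
rewrite /arcs.
set A := [set e | _]; set B := [set e | _].
have Hd : A :&: B = set0.
  apply/setP => e; rewrite !inE.
  apply/negP => /andP [/and3P [/imsetP [u Hu E1] _ _] /and3P [/imsetP [u' Hu' E2] _ _]].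
  move: Hu Hu'; rewrite !inE => /andP [/eqP Hu _] /andP [/eqP Hu' _].
  move: Hii; rewrite -Hu -Hu' ffunE ffunE -E1 E2 eqxx //.
have -> : (#|A| + #|B| = #|A :|: B|)%N by rewrite cardsU Hd cards0 subn0.
rewrite /noncrossing -(card_imset _ vv_inj); apply: subset_leq_card.
apply/subsetP => e; rewrite !inE => /orP [] /and3P [/imsetP [u Hu E1] /imsetP [u' Hu' E2] HG];
  apply/imsetP; exists (u, u'); [ | by case: e E1 E2 {HG} => ? ? /= -> -> |
    | by case: e E1 E2 {HG} => ? ? /= -> -> ];
  rewrite inE /del2 /= -E1 -E2 HG /=;
  move: Hu Hu'; rewrite !inE => /andP [_ /eqP ->] /andP [_ /eqP ->]; by [].
Qed.

Lemma sub_part (p : {ffun T -> 'I_r}) i j : val @: UU q0 p i j \subset part Q i.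
Proof.
apply/subsetP => v /imsetP [u]; rewrite !inE ffunE => /andP [/eqP <- _] ->.
by [].
Qed.

Lemma part_bound (p : {ffun T -> 'I_r}) i :
  (#|part Q i| <= \sum_j #|UU q0 p i j| + 2)%N.
Proof.
have -> : (\sum_j #|UU q0 p i j| = #|[set u : T | q0 u == i]|)%N.
  rewrite (card_split _ p); apply: eq_bigr => j _; apply: eq_card => u.
  by rewrite !inE.
have Hs : part Q i \subset val @: [set u : T | q0 u == i] :|: [set x; y].
  apply/subsetP => v; rewrite inE => Hv; rewrite inE.
  case: (boolP (v \in [set x; y])) => Hxy; first by rewrite orbT.
  apply/orP; left; apply/imsetP; exists (exist _ v Hxy) => //.
  by rewrite !inE ffunE.
apply: leq_trans (subset_leq_card Hs) _.
apply: leq_trans (leq_card_setU _ _) _.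
rewrite (card_imset _ val_inj) leq_add2l cards2.
by case: (x != y).
Qed.
End G.

Unset Implicit Arguments.
Open Scope R_scope.
Lemma exp_pow_eq z k : exp z ^ k = exp (INR k * z).
Proof.
induction k as [|k IH]; simpl. rewrite Rmult_0_l exp_0; ring.
rewrite IH -exp_plus; f_equal. destruct k; simpl; ring.
Qed.
Lemma nat_between z : 0 <= z -> exists a : nat, z < INR a <= z + 1.
Proof.
intros Hz. destruct (archimed z) as [H1 H2].
assert (Hp : (0 <= up z)%Z). { apply le_IZR; lra. }
exists (Z.to_nat (up z)). rewrite INR_IZR_INZ Z2Nat.id; [lra|exact Hp].
Qed.
Lemma Rpower_facts mu : 0 < mu -> let l := Rpower mu (1/12) in
  0 < l /\ l ^ 12 = mu /\ Rpower mu (2/3) = l ^ 8.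
Proof.
intros H l. assert (Hl : 0 < l) by (unfold l, Rpower; apply exp_pos).
split; [exact Hl|split].
- rewrite <- Rpower_pow by exact Hl. unfold l. rewrite Rpower_mult.
  replace (1/12 * INR 12) with 1 by (simpl; field). apply Rpower_1; exact H.
- rewrite <- Rpower_pow by exact Hl. unfold l. rewrite Rpower_mult.
  f_equal. simpl; field.
Qed.


Lemma real_setup (r : nat) (mu : R) : (2 <= r)%N -> 0 < mu < 1 / (3 * INR r ^ 2) ^ 12 ->
  exists L, 3 * INR r ^ 2 < L /\ mu = / L ^ 12 /\ Rpower mu (2/3) = / L ^ 8.
Proof.
move=> Hr [mu0 muB].
have [l0 [l12 l8]] := Rpower_facts _ mu0.
set l := Rpower mu (1/12) in l0 l12 l8.
have HR0 : 2 <= INR r by (have := le_INR 2 r (elimT leP Hr)); simpl; lra.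
have Hc : 0 < 3 * INR r ^ 2 by nra.
exists (/ l); split; last split.
- apply: (Rmult_lt_reg_l l) => //. rewrite Rinv_r; last lra.
  apply: Rnot_le_lt => H.
  have := pow_R1_Rle _ 12 H. rewrite Rpow_mult_distr l12 => H2.
  have Hc12 : 0 < (3 * INR r ^ 2) ^ 12 by apply: pow_lt.
  have : mu * (3 * INR r ^ 2) ^ 12 < 1.
    apply: (Rmult_lt_reg_r (/ (3 * INR r ^ 2) ^ 12)); first by apply: Rinv_0_lt_compat.
    rewrite Rmult_assoc Rinv_r; last lra. lra.
  lra.
- by rewrite pow_inv Rinv_inv.
- by rewrite pow_inv Rinv_inv.
Qed.

Lemma exp_le x y : x <= y -> exp x <= exp y.
Proof. move=> H; case: (Rle_lt_or_eq_dec _ _ H) => [H1|->]; last lra.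
by apply: Rlt_le; apply: exp_increasing. Qed.

Lemma INR_mul (a b : nat) : INR (a * b)%N = INR a * INR b.
Proof. by rewrite -mult_INR. Qed.

Lemma INR_exp (a b : nat) : INR (a ^ b)%N = INR a ^ b.
Proof. elim: b => [|b IH]; first by rewrite expn0.
by rewrite expnS INR_mul IH /=. Qed.

Theorem lemma5p4 (r t : nat) (mu eta : R) :
  (2 <= r)%N -> (1 <= t)%N ->
  0 < mu < 1 / (3 * INR r ^ 2) ^ 12 ->
  0 < eta < mu ^ 2 / 3 ->
  exists N : nat, forall n : nat, (N <= n)%N ->
  forall (Q : {ffun 'I_n -> 'I_r}) (x y : 'I_n),
    x != y -> nat_of_ord (Q x) = 0%N -> nat_of_ord (Q y) = 0%N ->
    exists P : {set {ffun minus2 x y -> 'I_r}},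
      INR #|P| <= exp (Rpower mu (2 / 3) * INR n) /\
      forall G : rel 'I_n, Fstar n r t eta mu Q G ->
        forall p : {ffun minus2 x y -> 'I_r}, optimal (del2 G x y) p -> p \in P.
Proof.
move=> Hr Ht Hmu [eta0 etaB].
have [L [HL [Emu E23]]] := real_setup _ _ Hr Hmu.
rewrite E23.
set R0 := INR r in HL Hmu *.
have HR0 : 2 <= R0 by rewrite /R0; (have := le_INR 2 r (elimT leP Hr)); simpl; lra.
have H3R : 12 <= 3 * R0 ^ 2 by replace (R0 ^ 2) with (R0 * R0) by ring; nra.
have HL12 : 12 < L by lra.
have L0 : 0 < L by lra.
have HL8 : 1 <= L ^ 8 by apply: pow_R1_Rle; lra.
have HL80 : 0 < L ^ 8 by lra.
have HRr := pos_INR (r ^ r).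
have HR2L : 0 <= R0 ^ 2 * L by nra.
have Hpos1 : 0 <= 4 * L ^ 8 * (INR (r ^ r) + 9 * R0 ^ 2 * L).
  apply: Rmult_le_pos; lra.
have [N [HN1 HN2]] := nat_between (4 * L ^ 8 * (INR (r ^ r) + 9 * R0 ^ 2 * L) + 2 * R0 * (R0 + 2) + 1)
  ltac:(nra).
exists N => n Hn Q x y Hxy _ _.
set X := INR n.
have HXN : INR N <= X by apply: le_INR; apply/leP.
have HX0 : 0 < X by nra.
have Hmu0 : 0 <= mu by lra.
have HmuL12 : mu * L ^ 12 = 1 by rewrite Emu Rinv_l //; apply: pow_nonzero; lra.
have HL11 : 1 <= L ^ 11 by apply: pow_R1_Rle; lra.
have HLL : L <= L ^ 12 by rewrite (_ : L ^ 12 = L * L ^ 11) //; nra.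
have HmuL : mu * L <= 1 by nra.
have Hmu1 : mu * (R0 * (1 + R0)) <= 1 / 2.
  have : R0 * (1 + R0) <= L / 2 by nra.
  nra.
have [a [Ha1 Ha2]] := nat_between (mu * X) ltac:(nra).
have HK0 : 0 <= 4 * R0 * L ^ 8 by nra.
have [K [HK1 HK2]] := nat_between (4 * R0 * L ^ 8) HK0.
have K0 : (0 < K)%N by case: K HK1 HK2 => [|K] /=; [nra | ].
set m := (r * r * a)%N.
exists [set p : {ffun minus2 x y -> 'I_r} | [exists s : {ffun 'I_r -> 'I_r}, (mis (q0 Q x y) s p <= m)%N]].
split; last first.
  move=> G [HGl [HGf [HGo [HGnc [HF2 HF3]]]]] p Hopt.
  rewrite inE; apply/existsP.
  have HncQ : INR (noncrossing (del2 G x y) p) <= eta * X ^ 2.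
    apply: Rle_trans HGnc; apply: le_INR; apply/leP.
    apply: leq_trans (Hopt (q0 Q x y)) _; exact: nc_restrict.
  have Hyp2 : forall i i' j, i != i' -> (a <= #|UU (q0 Q x y) p i j|)%N ->
      (a <= #|UU (q0 Q x y) p i' j|)%N -> False.
    move=> i i' j Hii H1 H2.
    have := arcs_le Q G p j Hii.
    set Ui := val @: UU (q0 Q x y) p i j.
    set Uj := val @: UU (q0 Q x y) p i' j => Har.
    have cUi : #|Ui| = #|UU (q0 Q x y) p i j| by rewrite card_imset //; exact: val_inj.
    have cUj : #|Uj| = #|UU (q0 Q x y) p i' j| by rewrite card_imset //; exact: val_inj.
    have Ri : INR a <= INR #|Ui| by apply: le_INR; apply/leP; rewrite cUi.
    have Rj : INR a <= INR #|Uj| by apply: le_INR; apply/leP; rewrite cUj.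
    have Mi : mu * X <= INR #|Ui| by lra.
    have Mj : mu * X <= INR #|Uj| by lra.
    have [A1 A2] := HF2 i i' Ui Uj Hii (sub_part _ _ _ _) (sub_part _ _ _ _) Mi Mj.
    have Har' : INR (arcs G Ui Uj) + INR (arcs G Uj Ui) <= eta * X ^ 2.
      rewrite -plus_INR; apply: Rle_trans HncQ; apply: le_INR; apply/leP; exact: Har.
    have Hprod : INR a * INR a <= INR #|Ui| * INR #|Uj|.
      apply: Rmult_le_compat => //; apply: pos_INR.
    have Hmx : (mu * X) * (mu * X) < INR a * INR a.
      apply: Rmult_le_0_lt_compat; nra.
    have Heta : eta * X ^ 2 < mu ^ 2 / 3 * X ^ 2.
      apply: Rmult_lt_compat_r => //; nra.
    have E1 : (mu * X) * (mu * X) = mu ^ 2 * X ^ 2 by ring.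
    have S1 : / 6 * INR #|Ui| * INR #|Uj| + / 6 * INR #|Ui| * INR #|Uj| <= eta * X ^ 2.
      apply: Rle_trans Har'. apply: Rplus_le_compat; exact: Rge_le.
    lra.
  have Hyp1 : forall i, exists j, (a <= #|UU (q0 Q x y) p i j|)%N.
    move=> i.
    case: (boolP [exists j, (a <= #|UU (q0 Q x y) p i j|)%N]) => [/existsP //|/existsPn Hnj].
    exfalso.
    have Hsum : (\sum_j #|UU (q0 Q x y) p i j| <= r * a)%N.
      apply: leq_trans (_ : (\sum_(j : 'I_r) a <= r * a)%N).
        by apply: leq_sum => j _; have := Hnj j; rewrite -ltnNge => /ltnW.
      by rewrite sum_nat_const card_ord.
    have Hp := part_bound Q p i.
    have Hp2 : (#|part Q i| <= r * a + 2)%N by apply: leq_trans Hp _; rewrite leq_add2r.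
    have Rp : INR #|part Q i| <= R0 * INR a + 2.
      have := le_INR _ _ (elimT leP Hp2); rewrite plus_INR INR_mul -/R0 (_ : INR 2 = 2) //; lra.
    have HF := HF3 i; rewrite -/X -/R0 in HF.
    have := Rle_abs (- (INR #|part Q i| - X / R0)); rewrite Rabs_Ropp => Hab.
    have Hlow : X / R0 - mu * X <= INR #|part Q i| by lra.
    have HXR : X / R0 * R0 = X by field; lra.
    have : X - mu * X * R0 <= R0 * (R0 * INR a + 2).
      have := Rmult_le_compat_r R0 _ _ ltac:(lra) (Rle_trans _ _ _ Hlow Rp). nra.
    nra.
  have [s Hs] := core_lemma Hyp1 Hyp2.
  exists s; exact: Hs.
set P := [set p | _].
have Hc := count_lemma (q0 Q x y) m K0.
have Hc2 : (#|P| * K ^ #|{: minus2 x y}| <= r ^ r * (K + r.-1) ^ #|{: minus2 x y}| * K ^ m)%N.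
  apply: (@leq_trans (#|P| * (K ^ (#|{: minus2 x y}| - m) * K ^ m))).
    apply: leq_mul => //; rewrite -expnD leq_pexp2l //; lia.
  by rewrite mulnA leq_mul2r Hc orbT.
have Hs : (#|{: minus2 x y}| <= n)%N.
  by rewrite -[X in (_ <= X)%N](card_ord n); apply: leq_card; exact: val_inj.
set sT := #|{: minus2 x y}| in Hc2 Hs.
have HsX : INR sT <= X by apply: le_INR; apply/leP.
have Kr0 : 0 < INR K by nra.
set Kr := INR K in Kr0 HK1 HK2.
set E := X / (4 * L ^ 8).
have HE : E * (4 * L ^ 8) = X by rewrite /E; field; lra.
have Hr1 : INR #|P| * Kr ^ sT <= INR (r ^ r) * INR (K + r.-1) ^ sT * Kr ^ m.
  have := le_INR _ _ (elimT leP Hc2). by rewrite !INR_mul !INR_exp.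
have Hkr : INR (K + r.-1) <= Kr + R0.
  rewrite plus_INR; apply: Rplus_le_compat_l; apply: le_INR; apply/leP; exact: leq_pred.
have HQ : R0 / Kr * (4 * L ^ 8) <= 1.
  have EQ : Kr * (R0 / Kr) = R0 by field; lra.
  have HQ0 : 0 <= R0 / Kr by exact: (Rmult_le_pos R0 (/ Kr) ltac:(lra) (Rlt_le _ _ (Rinv_0_lt_compat _ Kr0))).
  nra.
have HQ2 : R0 / Kr <= / (4 * L ^ 8).
  apply: (Rmult_le_reg_r (4 * L ^ 8)); first lra.
  rewrite Rinv_l; lra.
have B2 : INR (K + r.-1) ^ sT <= Kr ^ sT * exp E.
  apply: Rle_trans (pow_incr _ _ sT (conj (pos_INR _) Hkr)) _.
  have H1 : Kr + R0 <= Kr * exp (R0 / Kr).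
    have := exp_ineq1_le (R0 / Kr).
    have -> : Kr + R0 = Kr * (1 + R0 / Kr) by field; lra.
    move=> H; apply: Rmult_le_compat_l; lra.
  have HKR0 : 0 <= Kr + R0 by lra.
  apply: Rle_trans (pow_incr _ _ sT (conj HKR0 H1)) _.
  rewrite Rpow_mult_distr exp_pow_eq.
  apply: Rmult_le_compat_l; first by apply: pow_le; lra.
  apply: exp_le.
  have : 0 <= R0 / Kr by exact: (Rmult_le_pos R0 (/ Kr) ltac:(lra) (Rlt_le _ _ (Rinv_0_lt_compat _ Kr0))).
  have := pos_INR sT.
  rewrite /E /Rdiv. move=> H2 H3.
  apply: Rmult_le_compat => //.
have H4R : 4 * R0 + 1 <= L by nra.
have HKL : Kr <= exp (INR 9 * L).
  rewrite -exp_pow_eq.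
  have HL9 : L ^ 9 = L * L ^ 8 by ring.
  apply: (@Rle_trans _ (L ^ 9)); first nra.
  apply: pow_incr; split; first lra.
  have := exp_ineq1_le L; lra.
have Hma : INR m = R0 * R0 * INR a by rewrite /m !INR_mul.
have H36 : 36 * R0 ^ 2 <= L ^ 3.
  have : L ^ 3 = L * L * L by ring.
  nra.
have HmuL9 : mu * L ^ 9 * L ^ 3 = 1 by rewrite -HmuL12; ring.
have Hm9 : 9 * R0 ^ 2 * L * mu <= / (4 * L ^ 8).
  apply: (Rmult_le_reg_r (4 * L ^ 8)); first lra.
  rewrite Rinv_l; last lra.
  have -> : 9 * R0 ^ 2 * L * mu * (4 * L ^ 8) = 36 * R0 ^ 2 * (mu * L ^ 9) by ring.
  have : 0 <= mu * L ^ 9 by apply: Rmult_le_pos; [lra | apply: pow_le; lra].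
  nra.
have B3 : Kr ^ m <= exp (E + 9 * R0 ^ 2 * L).
  apply: (@Rle_trans _ (exp (INR 9 * L) ^ m)).
    apply: pow_incr; split; lra.
  rewrite exp_pow_eq; apply: exp_le.
  rewrite Hma (_ : INR 9 = 9); last by simpl; ring.
  have Ha3 : 0 <= INR a by apply: pos_INR.
  have : R0 * R0 * INR a * (9 * L) <= 9 * R0 ^ 2 * L * (mu * X + 1).
    have -> : R0 * R0 * INR a * (9 * L) = 9 * R0 ^ 2 * L * INR a by ring.
    apply: Rmult_le_compat_l => //; nra.
  have : 9 * R0 ^ 2 * L * mu * X <= E.
    rewrite /E /Rdiv; nra.
  nra.
have HEbig : INR (r ^ r) + 9 * R0 ^ 2 * L <= E.
  apply: (Rmult_le_reg_r (4 * L ^ 8)); first lra.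
  rewrite HE; lra.
have B4 : INR (r ^ r) <= exp E.
  have := exp_ineq1_le E; nra.
have B5 : exp (E + 9 * R0 ^ 2 * L) <= exp E * exp E.
  rewrite -exp_plus; apply: exp_le; lra.
have Efin : exp (/ L ^ 8 * X) = exp E * exp E * (exp E * exp E).
  rewrite -!exp_plus; f_equal; rewrite /E; field; lra.
have eE := exp_pos E.
have Ks : 0 < Kr ^ sT by apply: pow_lt.
have HB3 : 0 <= Kr ^ m by apply: pow_le; lra.
have Hfin : INR #|P| * Kr ^ sT <= exp (/ L ^ 8 * X) * Kr ^ sT.
  apply: Rle_trans Hr1 _.
  rewrite Efin.
  have : INR (r ^ r) * INR (K + r.-1) ^ sT <= exp E * (Kr ^ sT * exp E).
    apply: Rmult_le_compat => //; apply: pow_le; apply: pos_INR.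
  move=> H.
  have H0 : 0 <= INR (r ^ r) * INR (K + r.-1) ^ sT.
    apply: Rmult_le_pos; [apply: pos_INR | apply: pow_le; apply: pos_INR].
  apply: (@Rle_trans _ ((exp E * (Kr ^ sT * exp E)) * (exp E * exp E))).
    apply: Rmult_le_compat => //; exact: Rle_trans B3 B5.
  right; ring.
by apply: (Rmult_le_reg_r (Kr ^ sT)).
Qed.
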